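(* Let $(X,\to,d_A)$ be a finitely branching metric transition system over $A$. Then $\mathit{lo}_S$ is $c_S$-compatible, i.e. $\mathit{lo}_S(c_S(\mathcal F))\subseteq c_S(\mathit{lo}_S(\mathcal F))$ for every $\mathcal F\subseteq[0,1]^X$.
   Context: A metric transition system: $(X,\to,d_A)$ with $\to\subseteq X\times A\times X$ and a metric $d_A\colon A\times A\to[0,1]$; finitely branching: each $\{(a,x')\mid x\xrightarrow{a}x'\}$ is finite. $r\oplus s=\min\{r+s,1\}$, $r\ominus s=\max\{0,r-s\}$. $\bigcirc_cf(x)=\bigvee\{(1-d_A(b,c))\land f(x')\mid x\xrightarrow{b}x'\}$ (empty join $=0$). $\mathit{lo}_S(\mathcal F)=\bigcup_{c\in A}\{\bigcirc_cf\mid f\in\mathrm{cl}^{\land,\mathrm{sh}}_f(\mathcal F)\}$, where $\mathrm{cl}^{\land,\mathrm{sh}}_f$ closes under finite pointwise meets (empty meet = constant 1) and constant shifts $f\mapsto f\ominus r$, $f\mapsto f\oplus r$, $r\in[0,1]$. $\alpha_S(\mathcal F)(x_1,x_2)=\bigvee_{f\in\mathcal F}(f(x_1)\ominus f(x_2))$, $\gamma_S(d)=\{f\mid\forall x_1,x_2\colon f(x_1)\ominus f(x_2)\le d(x_1,x_2)\}$ for directed pseudo-metrics $d$ on $X$, $c_S=\gamma_S\circ\alpha_S$. *)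

(* Defs.v *)
From HB Require Import structures.
From mathcomp Require Import all_boot all_order all_algebra.
From mathcomp Require Import boolp classical_sets cardinality reals.
Set Implicit Arguments. Unset Strict Implicit. Unset Printing Implicit Defensive.
Import Order.TTheory GRing.Theory Num.Theory.
Local Open Scope ring_scope.
Local Open Scope classical_set_scope.

Section Defs.
Variables (R : realType) (X A : Type).

Definition oplus (r s : R) : R := Num.min (r + s) 1.
Definition ominus (r s : R) : R := Num.max (r - s) 0.

(* join of a subset of [0,1]; the empty join is 0 *)
Definition join01 (S : set R) : R := sup ([set 0] `|` S).

Definition in01 (r : R) : Prop := 0 <= r <= 1.
Definition fun01 (f : X -> R) : Prop := forall x, in01 (f x).

Definition label_metric (dA : A -> A -> R) : Prop :=
  (forall a b, in01 (dA a b)) /\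
  (forall a, dA a a = 0) /\
  (forall a b, dA a b = 0 -> a = b) /\
  (forall a b, dA a b = dA b a) /\
  (forall a b c, dA a c <= dA a b + dA b c).

Definition fin_branching (tr : X -> A -> X -> Prop) : Prop :=
  forall x, finite_set [set ax : A * X | tr x ax.1 ax.2].

Definition next (tr : X -> A -> X -> Prop) (dA : A -> A -> R) (c : A)
  (f : X -> R) : X -> R :=
  fun x => join01 [set v | exists b x', tr x b x' /\
                                v = Num.min (1 - dA b c) (f x')].

(* closure under finite pointwise meets (empty meet = constant 1) and
   constant shifts f (-) r, f (+) r, r in [0,1] *)
Inductive cl_meet_shift (F : set (X -> R)) : (X -> R) -> Prop :=
| cl_base f : F f -> cl_meet_shift F f
| cl_top : cl_meet_shift F (fun _ => 1)
| cl_meet f g : cl_meet_shift F f -> cl_meet_shift F g ->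
    cl_meet_shift F (fun x => Num.min (f x) (g x))
| cl_shminus f r : in01 r -> cl_meet_shift F f ->
    cl_meet_shift F (fun x => ominus (f x) r)
| cl_shplus f r : in01 r -> cl_meet_shift F f ->
    cl_meet_shift F (fun x => oplus (f x) r).

Definition loS tr dA (F : set (X -> R)) : set (X -> R) :=
  [set h | exists c f, cl_meet_shift F f /\ h = next tr dA c f].

Definition alphaS (F : set (X -> R)) : X -> X -> R :=
  fun x1 x2 => join01 [set v | exists f, F f /\ v = ominus (f x1) (f x2)].

Definition gammaS (d : X -> X -> R) : set (X -> R) :=
  [set f | fun01 f /\ forall x1 x2, ominus (f x1) (f x2) <= d x1 x2].

Definition cS (F : set (X -> R)) : set (X -> R) := gammaS (alphaS F).

End Defs.

(* Main.v *)
Require Import Defs.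
From mathcomp Require Import all_boot all_order all_algebra.
From mathcomp Require Import boolp classical_sets cardinality reals.
From mathcomp Require Import ring lra.
Local Open Scope ring_scope.
Local Open Scope classical_set_scope.
Import Order.TTheory GRing.Theory Num.Theory.

Ltac mm := rewrite /ominus /oplus; repeat (
  repeat match goal with
  | H : context[Num.min _ _] |- _ => revert H
  | H : context[Num.max _ _] |- _ => revert H end;
  match goal with
  | |- context[Num.min ?a ?b] => case: (leP a b)
  | |- context[Num.max ?a ?b] => case: (leP a b)
  end; intros); lra.

Section Aux.
Variable R : realType.

Lemma J_hs (S : set R) M : (forall v, S v -> v <= M) -> has_sup ([set 0] `|` S).
Proof.
move=> H; split; first by exists 0; left.
exists (Num.max 0 M) => v [->|/H]; first by rewrite le_max lexx.
by move=> vM; rewrite le_max vM orbT.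
Qed.

Lemma J_ge (S : set R) M v : (forall v, S v -> v <= M) -> S v -> v <= join01 S.
Proof. move=> H Sv; rewrite /join01; have K := sup_upper_bound (J_hs _ _ H); apply: K; by right. Qed.

Lemma J_ge0 (S : set R) M : (forall v, S v -> v <= M) -> 0 <= join01 S.
Proof. by move=> H; rewrite /join01; apply: (sup_upper_bound (J_hs _ _ H)); left. Qed.

Lemma J_le (S : set R) M : (forall v, S v -> v <= M) -> 0 <= M -> join01 S <= M.
Proof.
move=> H M0; rewrite /join01; apply: ge_sup; first by exists 0; left.
by move=> v [->|/H].
Qed.

Lemma J_adh (S : set R) M e : (forall v, S v -> v <= M) -> 0 < e ->
  exists2 v, ([set 0] `|` S) v & join01 S - e < v.
Proof. by move=> H e0; rewrite /join01; apply: sup_adherent => //; apply: J_hs _ _ H. Qed.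


Lemma min_mono (a b c : R) : b <= c -> Num.min a b <= Num.min a c.
Proof. move=> ?; mm. Qed.

Lemma r_meet (a b c d : R) :
  ominus (Num.min a b) (Num.min c d) <= Num.max (ominus a c) (ominus b d).
Proof. mm. Qed.

Lemma r_shm (a c r : R) : ominus (ominus a r) (ominus c r) <= ominus a c.
Proof. mm. Qed.

Lemma r_shp (a c r : R) : ominus (oplus a r) (oplus c r) <= ominus a c.
Proof. mm. Qed.

End Aux.
Arguments J_hs {R S} M.
Arguments J_ge {R S} M v.
Arguments J_ge0 {R S} M.
Arguments J_le {R S} M.
Arguments J_adh {R S} M e.
Arguments r_meet {R}.
Arguments min_mono {R}.
Arguments r_shm {R}.
Arguments r_shp {R}.

Section Main.
Variables (R : realType) (X A : Type).
Implicit Types (F G : set (X -> R)).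

Lemma in01P (r : R) : in01 r <-> 0 <= r /\ r <= 1.
Proof. by rewrite /in01; split => [/andP|[-> ->]]. Qed.

Lemma cl01 G g : (forall f, G f -> fun01 f) -> cl_meet_shift G g -> fun01 g.
Proof.
move=> HG; elim => {g} [f /HG //| |f g _ Hf _ Hg|f r /in01P [r0 r1] _ Hf|f r /in01P [r0 r1] _ Hf] x.
- by apply/in01P; rewrite ler01 lexx.
- move: (Hf x) (Hg x) => /in01P [? ?] /in01P [? ?]; apply/in01P; split; mm.
- move: (Hf x) => /in01P [? ?]; apply/in01P; split; mm.
- move: (Hf x) => /in01P [? ?]; apply/in01P; split; mm.
Qed.

Lemma om_le1 (a b : R) : 0 <= b -> a <= 1 -> ominus a b <= 1.
Proof. move=> *; mm. Qed.

Lemma alpha_bd F y z : (forall f, F f -> fun01 f) ->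
  forall v, (fun v => exists f, F f /\ v = ominus (f y) (f z)) v -> v <= 1.
Proof.
move=> HF v [f [/HF Hf ->]]; move: (Hf y) (Hf z) => /in01P [? ?] /in01P [? ?].
exact: om_le1.
Qed.

Lemma clNE F g : (forall f, F f -> fun01 f) -> cl_meet_shift (cS F) g ->
  forall y z, ominus (g y) (g z) <= alphaS F y z.
Proof.
move=> HF; elim => {g} [f [_ Hf] //| |f g _ Hf _ Hg|f r _ _ Hf|f r _ _ Hf] y z.
- have -> : ominus (1:R) 1 = 0 by rewrite /ominus subrr maxxx.
  exact: (J_ge0 _ (alpha_bd _ _ _ HF)).
- apply: le_trans (r_meet _ _ _ _) _.
  by rewrite ge_max Hf Hg.
- exact: le_trans (r_shm _ _ _) (Hf y z).
- exact: le_trans (r_shp _ _ _) (Hf y z).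
Qed.

Variables (tr : X -> A -> X -> Prop) (dA : A -> A -> R).
Hypothesis Hd : label_metric dA.

Lemma dA0 a b : 0 <= dA a b.
Proof. by case: Hd => H _; case/in01P: (H a b). Qed.

Lemma next_bd c f x : forall v, (fun v => exists b x', tr x b x' /\
                                v = Num.min (1 - dA b c) (f x')) v -> v <= 1.
Proof.
move=> v [b [x' [_ ->]]]; have := dA0 b c; move=> ?; mm.
Qed.

Lemma next01 c f x : in01 (Defs.next tr dA c f x).
Proof.
apply/in01P; split; first exact: (J_ge0 _ (@next_bd c f x)).
by apply: (J_le _ (@next_bd c f x)).
Qed.

Lemma list_meet (T : eqType) (P : T -> (X -> R) -> Prop) G y :
  (forall t phi psi, P t phi -> (forall x, psi x <= phi x) -> P t psi) ->
  (forall t, exists phi, cl_meet_shift G phi /\ phi y = 1 /\ P t phi) ->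
  forall s : seq T, exists phi, cl_meet_shift G phi /\ phi y = 1 /\
    forall t, t \in s -> P t phi.
Proof.
move=> Hmon Hex; elim => [|t s [phi [Cphi [phiy Pphi]]]].
  by exists (fun _ => 1); split; [exact: cl_top|split].
have [psi [Cpsi [psiy Ppsi]]] := Hex t.
exists (fun x => Num.min (psi x) (phi x)); split; first exact: cl_meet.
split; first by rewrite psiy phiy minxx.
move=> u; rewrite in_cons => /orP [/eqP ->|us].
  by apply: Hmon Ppsi _ => x; rewrite ge_min lexx.
by apply: Hmon (Pphi _ us) _ => x; rewrite ge_min lexx orbT.
Qed.

End Main.
Arguments cl01 {R X}.
Arguments in01P {R}.
Arguments dA0 {R A dA}.
Arguments om_le1 {R}.
Arguments alpha_bd {R X}.
Arguments clNE {R X}.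
Arguments next_bd {R X A tr dA}.
Arguments next01 {R X A tr dA}.
Arguments list_meet {R X}.

Theorem mainTheorem14 (R : realType) (X A : Type)
  (tr : X -> A -> X -> Prop) (dA : A -> A -> R) :
  label_metric dA -> fin_branching tr ->
  forall F : set (X -> R), (forall f, F f -> fun01 f) ->
  loS tr dA (cS F) `<=` cS (loS tr dA F).
Proof.
move=> Hd Hfb F HF _ [c [g [Hg ->]]].
have Hg01 : fun01 g.
  apply: (cl01 _ _ _ Hg) => f [] //.
have HgNE := clNE _ _ HF Hg.
split; first by move=> x; exact: (next01 (tr:=tr) Hd).
move=> x1 x2.
have N1b := next01 (tr:=tr) Hd c g x1; have N2b := next01 (tr:=tr) Hd c g x2.
have [N10 N11] := proj1 (in01P _) N1b; have [N20 N21] := proj1 (in01P _) N2b.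
set N1 := Defs.next tr dA c g x1 in N10 N11 *.
set N2 := Defs.next tr dA c g x2 in N20 N21 *.
set D := alphaS _ _ _.
have Dbd : forall v, (fun v => exists f, loS tr dA F f /\
     v = ominus (f x1) (f x2)) v -> v <= 1.
  move=> v [f [[c' [f' [_ ->]]] ->]].
  have Hnx1 := next01 (tr:=tr) Hd c' f' x1; have [? ?] := proj1 (in01P _) Hnx1.
  have Hnx2 := next01 (tr:=tr) Hd c' f' x2; have [? ?] := proj1 (in01P _) Hnx2.
  exact: om_le1.
have D0 : 0 <= D := J_ge0 _ Dbd.
suff key : forall e, 0 < e -> N1 - N2 <= D + 3 * e.
  apply/ler_addgt0Pr => e e0.
  have := key (e / 3); rewrite divr_gt0 // => /(_ isT) H.
  have E3 : 3 * (e / 3) = e by field.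
  rewrite E3 in H.
  rewrite /ominus; case: (leP (N1 - N2) 0) => _ //; lra.
move=> e e0.
case: (leP (N1 - N2) (3 * e)) => [|H3]; first lra.
have [v [v0|[b [y [Try vE]]]] vN1'] := J_adh _ e (next_bd (tr:=tr) Hd c g x1) e0;
  have vN1 : N1 - e < v := vN1'; clear vN1'.
  rewrite /= in v0; rewrite v0 in vN1; lra.
have vle : v <= 1 - dA b c by rewrite vE ge_min lexx.
have vleg : v <= g y by rewrite vE ge_min lexx orbT.
have [del delE] : {del | del = v - N2} by exists (v - N2).
have Hdel : 2 * e < del by lra.
suff : del - e <= D by lra.
have Hex : forall t : {classic (A * X)}, exists phi,
   cl_meet_shift F phi /\ phi y = 1 /\
   (tr x2 t.1 t.2 -> Num.min (1 - dA t.1 b) (phi t.2) <= 1 - del + e).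
  move=> t.
  have [H01 [Hrefl [Hsep [Hsym Htri]]]] := Hd.
  case: (EM (tr x2 t.1 t.2)) => Htr; last first.
    by exists (fun _ => 1); split; [exact: cl_top| split => // /Htr].
  have hm : Num.min (1 - dA t.1 c) (g t.2) <= N2 :=
    J_ge _ _ (next_bd (tr:=tr) Hd c g x2) (ex_intro _ t.1 (ex_intro _ t.2 (conj Htr erefl))).
  case: (leP (1 - dA t.1 c) N2) => H1.
    exists (fun _ => 1); split; first exact: cl_top.
    split => // _.
    have := Htri t.1 b c; have := dA0 Hd b c.
    have : Num.min (1 - dA t.1 b) 1 <= 1 - dA t.1 b by rewrite ge_min lexx.
    lra.
  have gz : g t.2 <= N2.
    by move: hm; case: (leP (1 - dA t.1 c) (g t.2)) => ? ?; lra.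
  have om1 : g y - g t.2 <= ominus (g y) (g t.2) by rewrite /ominus le_max lexx.
  have om2 := HgNE y t.2.
  have [w [w0|[f [Ff wE]]] wlt] := J_adh _ e (alpha_bd F y t.2 HF) e0;
    have wlt' : alphaS F y t.2 - e < w := wlt; clear wlt.
    by rewrite /= in w0; rewrite w0 in wlt'; lra.
  have fyz : del - e < f y - f t.2.
    by move: wE; rewrite /ominus; case: (leP (f y - f t.2) 0) => ? ?; lra.
  have [fy0 fy1] := proj1 (in01P _) (HF f Ff y).
  have [fz0 fz1] := proj1 (in01P _) (HF f Ff t.2).
  exists (fun x => oplus (f x) (1 - f y)); split.
    apply: cl_shplus; last exact: cl_base.
    by apply/in01P; split; lra.
  split; first by rewrite /oplus addrC subrK minxx.
  move=> _; rewrite /oplus.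
  have : Num.min (1 - dA t.1 b) (Num.min (f t.2 + (1 - f y)) 1) <= f t.2 + (1 - f y).
    by rewrite ge_min; apply/orP; right; rewrite ge_min lexx.
  lra.
pose P := fun (t : {classic (A * X)}) (phi : X -> R) =>
   tr x2 t.1 t.2 -> Num.min (1 - dA t.1 b) (phi t.2) <= 1 - del + e.
have Hmon : forall t phi psi, P t phi -> (forall x, psi x <= phi x) -> P t psi.
  move=> t phi psi H Hle Htr; apply: le_trans (H Htr).
  exact: min_mono.
have Hfin := Hfb x2.
have [s Es] := (finite_seqP (T:={classic (A * X)}) _).1 Hfin.
have [phi [Cphi [phiy Pphi]]] := list_meet _ P F y Hmon Hex s.
have [H01 [Hrefl [Hsep [Hsym Htri]]]] := Hd.
pose h := Defs.next tr dA b phi.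
have hx1 : Num.min (1 - dA b b) (phi y) <= h x1 :=
  J_ge _ _ (next_bd (tr:=tr) Hd b phi x1) (ex_intro _ b (ex_intro _ y (conj Try erefl))).
rewrite Hrefl phiy subr0 minxx in hx1.
have dbc := dA0 Hd b c.
have M0 : 0 <= 1 - del + e by lra.
have hx2 : h x2 <= 1 - del + e.
  apply: (J_le (1 - del + e)) M0 => w [b' [z [Htr ->]]].
  have : [set` s] (b', z) by rewrite -Es.
  by move=> /= Hin; apply: (Pphi (b', z)).
have hD : ominus (h x1) (h x2) <= D :=
  J_ge _ _ Dbd (ex_intro _ h (conj (ex_intro _ b (ex_intro _ phi (conj Cphi erefl))) erefl)).
have : h x1 - h x2 <= ominus (h x1) (h x2) by rewrite /ominus le_max lexx.
lra.
Qed.
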